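(* Suppose that in a spherical tiling by angle congruent pentagons some angle value $\theta$ appears at every degree $3$ vertex. Then $\theta$ appears at least twice among the five angles of the pentagon.
   Context: A spherical tiling by angle congruent pentagons is a graph embedded in the sphere whose faces (tiles) are all pentagons, the tiling being edge-to-edge with every vertex of degree at least $3$; each corner of each tile carries a positive real angle, the angles at every vertex sum to $2\pi$, and all tiles have the same multiset of five corner angles (the ''pentagon''). An angle value $\theta$ appears at a vertex if some corner at that vertex has angle $\theta$; it appears $k$ times in the pentagon if it has multiplicity $k$ in that multiset. *)

(* Defs.v *)
From mathcomp Require Import all_boot.
From Stdlib Require Import Reals List Permutation.

Set Implicit Arguments.
Unset Strict Implicit.
Unset Printing Implicit Defensive.

(* A map on the sphere, presented as a combinatorial map (rotation system).
   D = darts (half-edges); [alpha] = the edge involution (fixed-point free);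
   [sigma] = rotation around vertices (a permutation); faces are the orbits
   of [face_perm alpha sigma := alpha \o sigma].
   Vertices = sigma-orbits, edges = alpha-orbits, faces = phi-orbits.
   Each dart d also represents the corner at the vertex of d between d and
   sigma d; with the convention phi = alpha \o sigma, the five corners of a
   face are exactly the darts of the corresponding phi-orbit, and the corners
   at a vertex are exactly the darts of the corresponding sigma-orbit. *)

Definition face_perm (D : finType) (alpha sigma : D -> D) : D -> D :=
  fun d => alpha (sigma d).

Definition adj (D : finType) (alpha sigma : D -> D) : rel D :=
  [rel x y | (y == alpha x) || (y == sigma x)].

Definition n_orbits (D : finType) (f : D -> D) : nat := fcard f (@predT D).

Definition spherical_pentagonal_tiling (D : finType) (alpha sigma : D -> D)
  : Prop :=
  (forall d, alpha d != d) /\ (forall d, alpha (alpha d) = d) /\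
  injective sigma /\
      (forall x y, connect (adj alpha sigma) x y) /\
      (* embedded in the sphere: Euler characteristic V - E + F = 2 *)
      (n_orbits sigma + n_orbits (face_perm alpha sigma)
         = n_orbits alpha + 2)%N /\
      (forall d, order (face_perm alpha sigma) d = 5%N) /\
      (forall d, 3 <= order sigma d)%N.

Definition vertex_angle_sum (D : finType) (sigma : D -> D) (ang : D -> R)
  (d : D) : R :=
  \big[Rplus/R0]_(d' | fconnect sigma d d') ang d'.

(* Angle congruent tiling with pentagon P (a list of 5 angle values taken
   up to permutation, i.e. a multiset). *)
Definition angle_congruent (D : finType) (alpha sigma : D -> D)
  (ang : D -> R) (P : list R) : Prop :=
  [/\ (forall d, Rlt R0 (ang d)),
      (forall d, vertex_angle_sum sigma ang d = Rmult 2 PI)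
    & (forall d, Permutation (map ang (orbit (face_perm alpha sigma) d)) P)].

Definition mult (P : list R) (x : R) : nat := count_occ Req_EM_T P x.

Definition appears_at (D : finType) (sigma : D -> D) (ang : D -> R)
  (theta : R) (d : D) : Prop :=
  exists d', fconnect sigma d d' /\ ang d' = theta.

(* Main.v *)
Require Import Defs.
From mathcomp Require Import all_boot.
From Stdlib Require Import Reals List Permutation.
From mathcomp Require Import zify.

Module Aux.
From mathcomp Require Import all_boot zify.

Lemma sum_roots (T : finType) (f : T -> T) (injf : injective f) (P : pred T) :
  #|P| = \sum_(r | froots f r) #|[pred x | P x & fconnect f r x]|.
Proof.
rewrite -sum1_card (partition_big (froot f) (froots f)) /=; last first.
  by move=> x _; apply: (roots_root (fconnect_sym injf)).
apply: eq_bigr => r /eqP rr; rewrite sum1_card; apply: eq_card => x.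
rewrite -topredE /= !inE -{1}rr [froot f x == _]eq_sym (root_connect (fconnect_sym injf)).
by [].
Qed.

Lemma count_occ_map (T : Type) (ang : T -> R) (theta : R) (s : seq T) :
  count_occ Req_EM_T (List.map ang s) theta =
  count (fun d => if Req_EM_T (ang d) theta then true else false) s.
Proof.
elim: s => //= a s IH; rewrite IH; by case: Req_EM_T.
Qed.

Lemma lemma3_aux (D : finType) (alpha sigma : D -> D) (ang : D -> R)
  (P : list R) (theta : R) :
  spherical_pentagonal_tiling alpha sigma ->
  angle_congruent alpha sigma ang P ->
  (forall d, order sigma d = 3%N -> appears_at sigma ang theta d) ->
  (2 <= mult P theta)%N.
Proof.
move=> [a_nf [a_inv [s_inj [_ [euler [f5 s3]]]]]] [_ _ HP] H3.
set phi := face_perm alpha sigma.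
have a_inj : injective alpha by apply: (can_inj a_inv).
have p_inj : injective phi by move=> x y /a_inj /s_inj.
set th := fun d => if Req_EM_T (ang d) theta then true else false.
set m := mult P theta.
have HF : (n_orbits phi * 5 = #|D|)%N.
  rewrite /n_orbits (fcard_order_set p_inj (n:=5)) ?cardT //.
    by apply/subsetP => x _; rewrite inE f5.
have HE : (n_orbits alpha * 2 = #|D|)%N.
  rewrite /n_orbits (fcard_order_set a_inj (n:=2)) ?cardT //.
  apply/subsetP => x _; rewrite inE; apply/eqP.
  rewrite /order; transitivity #|pred2 x (alpha x)|; last by rewrite card2 eq_sym a_nf.
  apply: eq_card => y; rewrite !inE; apply/idP/idP.
    move=> cy; have cl : closed (frel alpha) (pred2 x (alpha x)).
      move=> u v /= /eqP <-; rewrite !inE.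
      apply/idP/idP => /orP[]/eqP Hu.
      - by rewrite Hu eqxx orbT.
      - by rewrite Hu a_inv eqxx.
      - by rewrite -(a_inv u) Hu eqxx orbT.
      - by rewrite (a_inj _ _ Hu) eqxx.
    by have := closed_connect cl cy; rewrite !inE eqxx.
  case/orP => /eqP ->; first exact: connect0.
  by apply: connect1; rewrite /= eqxx.
set R3 := [pred r | froots sigma r & order sigma r == 3].
have HV : (4 * n_orbits sigma <= #|D| + #|R3|)%N.
  have e1 := @sum_roots _ _ s_inj predT.
  have -> : #|D| = \sum_(r | froots sigma r) order sigma r.
    transitivity #|@predT D|; first by apply: eq_card.
    rewrite e1; apply: eq_bigr => r _; apply: eq_card => x.
    by rewrite !inE.
  have -> : #|R3| = \sum_(r | froots sigma r) (order sigma r == 3 : nat).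
    rewrite -sum1_card big_mkcondr /=.
    by apply: eq_bigr => r _; case: (_ == 3).
  have -> : n_orbits sigma = #|froots sigma|.
    by apply: eq_card => x; rewrite !inE andbT.
  rewrite -big_split /= -sum1_card big_distrr /=.
  apply: leq_sum => r _; have := s3 r; case: eqP => [->|]; lia.
have HT : #|th| = (n_orbits phi * m)%N.
  rewrite (@sum_roots _ _ p_inj th).
  have -> : n_orbits phi = #|froots phi|.
    by apply: eq_card => x; rewrite !inE andbT.
  rewrite -sum_nat_const; apply: eq_bigr => r _.
  rewrite /m /mult.
  have := proj1 (Permutation_count_occ Req_EM_T _ _) (HP r) theta.
  rewrite -/phi => <-; rewrite count_occ_map -size_filter.
  rewrite -(card_uniqP (filter_uniq _ (orbit_uniq phi r))).
  by apply: eq_card => x; rewrite !inE mem_filter -fconnect_orbit.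
set g := fun r => odflt r [pick d | fconnect sigma r d && th d].
have gP : forall r, r \in R3 -> fconnect sigma r (g r) && th (g r).
  move=> r; rewrite inE => /andP[_ /eqP o3].
  have [d' [c e]] := H3 r o3.
  rewrite /g; case: pickP => [d //|/(_ d')].
  by rewrite c /th; case: Req_EM_T.
have HI : (#|R3| <= #|th|)%N.
  rewrite -(card_in_image (f:=g)); last first.
    move=> r1 r2 H1 H2 E.
    have /andP[c1 _] := gP _ H1; have /andP[c2 _] := gP _ H2.
    move: H1 H2; rewrite !inE => /andP[/eqP r1r _] /andP[/eqP r2r _].
    rewrite -r1r -r2r; apply/eqP; rewrite (root_connect (fconnect_sym s_inj)).
    apply: (connect_trans c1); rewrite E (fconnect_sym s_inj) //.
  apply: subset_leq_card; apply/subsetP => y /imageP [r Hr ->].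
  by have /andP[_ H] := gP _ Hr; rewrite -topredE.
have e2 : (n_orbits sigma + n_orbits phi = n_orbits alpha + 2)%N := euler.
have : (#|D| + 40 <= 5 * (n_orbits phi * m))%N.
  move: e2 HF HE HV HT HI; clearbody phi; lia.
rewrite -HF => H; rewrite ltnNge; apply/negP => Hm.
have : (n_orbits phi * m <= n_orbits phi)%N.
  by rewrite -[X in (_ <= X)%N](muln1 (n_orbits phi)) leq_mul2l Hm orbT.
lia.
Qed.
End Aux.

Theorem lemma3 (D : finType) (alpha sigma : D -> D) (ang : D -> R)
  (P : list R) (theta : R) :
  spherical_pentagonal_tiling alpha sigma ->
  angle_congruent alpha sigma ang P ->
  (forall d, order sigma d = 3%N -> appears_at sigma ang theta d) ->
  (2 <= mult P theta)%N.
Proof.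
move=> H1 H2 H3; exact (@Aux.lemma3_aux D alpha sigma ang P theta H1 H2 H3).
Qed.
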